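(* Let $E=\bigcup_{i\in I}\gamma_i+B_i^\oplus$ be a semi-simple expression over $\mathbb{N}^k$ and let $n=|I|\cdot\|E\|$. For each $j\in\{1,\dots,k\}$ define $p_j=\operatorname{lcm}(m_1,\dots,m_{|I|})$, where (indexing $I=\{1,\dots,|I|\}$) $m_i=m$ if $m\mathbf{e}_j\in B_i$ and $m_i=1$ otherwise. Then $p_j=O\big(e^{\sqrt{n\log n}}\big)$.
   Context: $\mathbb{N}$ includes $0$; $\mathbf{e}_j$ is the $j$-th unit vector. For finite $B\subseteq\mathbb{N}^k$, $B^\oplus$ is the set of $\mathbb{N}$-linear combinations of elements of $B$ and $\gamma+B^\oplus=\{\gamma+\sigma:\sigma\in B^\oplus\}$. $B$ is free if every element of $B^\oplus$ has a unique representation as such a combination. A semi-simple expression is a finite union of expressions $\gamma_i+B_i^\oplus$ with $B_i$ free and denoted sets pairwise disjoint. For $\sigma=(b_1,\dots,b_k)$, $\|\sigma\|=\max_j b_j$; for $B\subseteq\mathbb{N}^k$, $\|B\|=\max_{\sigma\in B}\|\sigma\|$; and $\|E\|=\max(\max_{i\in I}\|\gamma_i\|,\max_{i\in I}\|B_i\|,2)$. (Each free basis $B_i$ contains at most one element of the form $m\mathbf{e}_j$ for fixed $j$.) *)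

(* Defs.v *)
From mathcomp Require Import all_boot.
From Stdlib Require Import Reals.
Set Implicit Arguments. Unset Strict Implicit. Unset Printing Implicit Defensive.

Definition vec (k : nat) := {ffun 'I_k -> nat}.

Definition vadd k (u v : vec k) : vec k := [ffun j => u j + v j].

Definition unitv k (j : 'I_k) (m : nat) : vec k := [ffun l => if l == j then m else 0].

Definition lincomb k (B : seq (vec k)) (c : 'I_(size B) -> nat) : vec k :=
  [ffun l => \sum_(t < size B) c t * (tnth (in_tuple B) t) l].

Definition in_linset k (gamma : vec k) (B : seq (vec k)) (sigma : vec k) : Prop :=
  exists c : 'I_(size B) -> nat, sigma = vadd gamma (lincomb c).

(* B (listed without repetition) is free: unique representations *)
Definition free k (B : seq (vec k)) : Prop :=
  uniq B /\
  forall c c' : 'I_(size B) -> nat, lincomb c = lincomb c' -> forall t, c t = c' t.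

Definition semi_simple k N (gamma : 'I_N -> vec k) (B : 'I_N -> seq (vec k)) : Prop :=
  (forall i, free (B i)) /\
  (forall i i' sigma, i != i' ->
     in_linset (gamma i) (B i) sigma -> in_linset (gamma i') (B i') sigma -> False).

Definition vnorm k (v : vec k) : nat := \max_(l < k) v l.
Definition snorm k (B : seq (vec k)) : nat := \max_(b <- B) vnorm b.
Definition Enorm k N (gamma : 'I_N -> vec k) (B : 'I_N -> seq (vec k)) : nat :=
  maxn (maxn (\max_(i < N) vnorm (gamma i)) (\max_(i < N) snorm (B i))) 2.

Definition mcoef k (B : seq (vec k)) (j : 'I_k) (m : nat) : Prop :=
  unitv j m \in B \/ ((forall m', unitv j m' \notin B) /\ m = 1).

(* Main.v *)
Require Import Defs.
From mathcomp Require Import all_boot.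
From mathcomp Require Import zify.
Set Implicit Arguments. Unset Strict Implicit. Unset Printing Implicit Defensive.


Definition Lc m := \big[lcmn/1%N]_(i < m) i.+1.

Lemma Lc_gt0 m : 0 < Lc m.
Proof. by rewrite /Lc; elim/big_ind: _ => // x y; rewrite lcmn_gt0 => -> ->. Qed.

Lemma dvd_Lc m d : 0 < d <= m -> d %| Lc m.
Proof.
case/andP=> d0 dm; have hd : d.-1 < m by rewrite prednK.
by apply: (biglcmn_sup (Ordinal hd)) => //=; rewrite prednK.
Qed.

Lemma fact_widen p x R : prime p -> x < R ->
  logn p x`! = \sum_(1 <= k < R) x %/ p ^ k.
Proof.
move=> pp xR; rewrite logn_fact // [RHS](big_cat_nat _ (n:=x.+1)) //=.
rewrite -[LHS]addn0; congr (_ + _); symmetry.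
rewrite big_nat_cond big1 // => k /andP[/andP[hk _] _].
rewrite divn_small //; apply: leq_trans hk _; apply: ltnW; apply: ltn_expl.
exact: prime_gt1.
Qed.

Lemma logn_bin_ge p a b e f : prime p -> b <= a -> a < p ^ f.+1 ->
  p ^ e <= a + b -> e - f <= logn p 'C(a + b, b).
Proof.
move=> pp ba af ea.
have p1 := prime_gt1 pp; have p0 := prime_gt0 pp.
have H := bin_fact (leq_addl a b); rewrite addnK in H.
have : logn p (a + b)`! = logn p 'C(a + b, b) + (logn p b`! + logn p a`!).
  by rewrite -H !lognM ?muln_gt0 ?fact_gt0 ?bin_gt0 ?leq_addl.
set R := (a + b).+1.
rewrite !(@fact_widen p _ R) // ?ltnS ?leq_addl ?leq_addr // -big_split /=.
move=> E.
have eR : e < R by rewrite ltnS; apply: leq_trans ea; apply: ltnW; apply: ltn_expl.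
case: (leqP e f) => [ef|fe]; first by rewrite (eqP (ef : e - f == 0)) // subn_eq0.
have key : \sum_(1 <= k < R) ((b %/ p ^ k + a %/ p ^ k) + (f < k <= e))
           <= \sum_(1 <= k < R) (a + b) %/ p ^ k.
  apply: leq_sum => k _.
  case: (boolP (f < k <= e)) => [/andP[fk ke]|_].
    have apk : a < p ^ k by apply: leq_trans af _; rewrite leq_pexp2l.
    rewrite (divn_small apk) (divn_small (leq_ltn_trans ba apk)).
    rewrite add0n addn1 divn_gt0 ?expn_gt0 ?p0 //.
    by apply: leq_trans ea; rewrite leq_pexp2l.
  have pk : 0 < p ^ k by rewrite expn_gt0 p0.
  by rewrite addn0 (divnD _ _ pk) addnC leq_addr.
rewrite big_split /= in key.
have cnt : e - f <= \sum_(1 <= k < R) (f < k <= e).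
  rewrite (big_cat_nat _ (n := f.+1)) //=; last by apply: ltn_trans eR.
  rewrite [X in _ + X](big_cat_nat _ (n := e.+1)) //=.
  have -> : \sum_(f.+1 <= k < e.+1) (f < k <= e) = e - f.
    rewrite -[RHS]muln1 -subSS -sum_nat_const_nat; apply: eq_big_nat.
    by move=> k /andP[fk ke]; rewrite fk /= -ltnS ke.
  by rewrite addnC -addnA leq_addr.
  by rewrite ltnS ltnW.
apply: leq_trans cnt _; rewrite -(leq_add2r (\sum_(1 <= i < R) (b %/ p ^ i + a %/ p ^ i))).
by rewrite -E addnC.
Qed.

Lemma Lc_split a b : b <= a -> Lc (a + b) %| Lc a * 'C(a + b, b).
Proof.
move=> ba; apply/dvdn_biglcmP => i _; set d := i.+1.
have hd : d <= a + b by exact: ltn_ord i.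
case: (leqP d a) => hda; first by apply: dvdn_mulr; apply: dvd_Lc.
have a0 : 0 < a.
  rewrite lt0n; apply/negP => /eqP a0; move: ba hd; rewrite a0 leqn0 => /eqP ->.
  by rewrite /d.
have C0 : 0 < Lc a * 'C(a + b, b) by rewrite muln_gt0 Lc_gt0 bin_gt0 leq_addl.
apply/dvdn_partP => // p; rewrite mem_primes => /and3P[pp _ pd].
rewrite p_part; set e := logn p d; set f := trunc_log p a.
have p1 := prime_gt1 pp.
have hpe : p ^ e <= d by apply: dvdn_leq => //; apply: pfactor_dvdnn.
have pfa : p ^ f <= a by apply: trunc_logP.
have pf0 : 0 < p ^ f by rewrite expn_gt0 prime_gt0.
case: (leqP e f) => hef.
  apply: dvdn_mulr; apply: dvdn_trans (dvd_Lc (d := p ^ f) _); last by rewrite pf0.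
  by rewrite dvdn_exp2l.
rewrite -(subnKC (ltnW hef)) expnD dvdn_mul //.
  by apply: dvd_Lc; rewrite pf0.
rewrite pfactor_dvdn ?bin_gt0 ?leq_addl //.
apply: logn_bin_ge => //; first exact: trunc_log_ltn.
exact: leq_trans hpe hd.
Qed.

Lemma bin_le_pow n k : 'C(n, k) <= 2 ^ n.
Proof.
case: (leqP k n) => kn; last by rewrite bin_small.
have := expnDn 1 1 n; rewrite addn1 => ->.
rewrite (bigD1 (Ordinal (kn : k < n.+1))) //= !exp1n !muln1; exact: leq_addr.
Qed.

Lemma bin_odd b : 'C(b.*2.+1, b) <= 4 ^ b.
Proof.
rewrite -(leq_pmul2l (isT : 0 < 2)).
have -> : 2 * 4 ^ b = 2 ^ b.*2.+1 by rewrite expnS -mul2n expnM.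
have := expnDn 1 1 b.*2.+1; rewrite addn1 => ->.
rewrite -(big_mkord xpredT (fun i => 'C(b.*2.+1, i) * (1 ^ (b.*2.+1 - i) * 1 ^ i))).
under eq_bigr do rewrite !exp1n muln1.
rewrite (big_cat_nat _ (n:=b)) //=; last by lia.
rewrite [X in _ + X](big_cat_nat _ (n:=b.+2)) //=; last by lia.
have -> : \sum_(b <= i < b.+2) 'C(b.*2.+1, i) * 1 = 'C(b.*2.+1, b) + 'C(b.*2.+1, b.+1) by rewrite big_ltn // big_nat1 !muln1.
have e : 'C(b.*2.+1, b.+1) = 'C(b.*2.+1, b).
  have -> : b.+1 = b.*2.+1 - b by lia.
  by rewrite bin_sub //; lia.
rewrite e mul2n -addnn; lia.
by rewrite leqW.
Qed.

Lemma Lc_bound m : Lc m <= 4 ^ m.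
Proof.
elim/ltn_ind: m => m IH.
case: (leqP m 1) => m1.
  by case: m m1 {IH} => [|[|]] //= _; rewrite /Lc ?big_ord0 ?big_ord1.
set b := m./2; set a := m - b.
have ba : b <= a by rewrite /a /b; lia.
have am : a < m by rewrite /a /b; lia.
have mab : m = a + b by rewrite /a /b; lia.
have hC : 'C(a + b, b) <= 4 ^ b.
  have := odd_double_half m; rewrite -/b mab.
  case: (odd (a + b)) => /= E.
    have -> : a + b = b.*2.+1 by lia.
    exact: bin_odd.
  have -> : a + b = b.*2 by lia.
  by apply: leq_trans (bin_le_pow _ _) _; rewrite -mul2n expnM.
rewrite mab; apply: leq_trans (dvdn_leq _ (Lc_split ba)) _.
  by rewrite muln_gt0 Lc_gt0 bin_gt0 leq_addl.
by rewrite expnD leq_mul // IH.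
Qed.

From Stdlib Require Import Reals.
From Stdlib Require Import Lra Lia Psatz.
Local Open Scope R_scope.

Lemma INR_expn (m n : nat) : INR (expn m n) = INR m ^ n.
Proof.
elim: n => [|n IH]; first by rewrite expn0.
by rewrite expnS mult_INR IH.
Qed.

Lemma ln_le' x y : 0 < x -> x <= y -> ln x <= ln y.
Proof.
move=> x0 [xy|->]; last by right.
by left; apply: ln_increasing.
Qed.

Lemma exp_le' x y : x <= y -> exp x <= exp y.
Proof. by move=> [xy|->]; [left; apply: exp_increasing | right]. Qed.

Lemma exp_pow' x n : exp x ^ n = exp (INR n * x).
Proof.
elim: n => [|n IH]; first by rewrite /= Rmult_0_l exp_0.
change (exp x ^ n.+1) with (exp x * exp x ^ n); rewrite IH -exp_plus S_INR; f_equal; ring.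
Qed.

Lemma ln4 : ln 4 <= 3/2.
Proof.
have h1 : 1 + /8 <= exp (/8) by apply: exp_ineq1_le.
have h2 : (1 + /8) ^ 12 <= exp (/8) ^ 12.
  apply: pow_incr; lra.
have h3 : exp (/8) ^ 12 = exp (3/2).
  rewrite exp_pow'; congr exp; simpl; lra.
have h4 : 4 <= exp (3/2).
  rewrite -h3; apply: Rle_trans h2; simpl; lra.
rewrite -[3/2]ln_exp; apply: ln_le' => //; lra.
Qed.

Lemma ln_sqrt_bound x : 256 <= x -> ln x <= sqrt x.
Proof.
move=> hx.
set s := sqrt x.
have s16 : 16 <= s.
  rewrite -(sqrt_square 16); last lra.
  apply: sqrt_le_1_alt; lra.
set t := sqrt s.
have t4 : 4 <= t.
  rewrite -(sqrt_square 4); last lra.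
  apply: sqrt_le_1_alt; lra.
have Hs : s * s = x by apply: sqrt_sqrt; lra.
have Ht : t * t = s by apply: sqrt_sqrt; lra.
have lnx : ln x = 4 * ln t.
  rewrite -Hs -Ht !ln_mult; try lra; try nra.
have lt0 : 0 < ln t by rewrite -ln_1; apply: ln_increasing; lra.
have : 1 + ln t < exp (ln t) by apply: exp_ineq1; lra.
rewrite exp_ln; last lra.
move=> h; rewrite lnx; nra.
Qed.

Lemma real_main (L M N : nat) : leq 1 L -> leq 256 M -> leq 1 N ->
  leq L (expn M N) -> leq L (expn 4 M) ->
  INR L <= exp (sqrt (INR (muln N M) * ln (INR (muln N M)))).
Proof.
move=> /leP/le_INR hL /leP/le_INR hM /leP/le_INR hN /leP/le_INR hLA /leP/le_INR hLB.
rewrite INR_expn in hLA; rewrite INR_expn in hLB.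
have e256 : INR 256 = 256 by rewrite !S_INR /=; lra.
have e4 : INR 4 = 4 by rewrite !S_INR /=; lra.
have e1 : INR 1 = 1 by [].
rewrite e256 in hM; rewrite e4 in hLB; rewrite e1 in hL hN.
set n := INR N in hN hLA *; set m := INR M in hM hLA hLB *.
set l := ln (INR L).
have l0 : 0 <= l by rewrite -ln_1; apply: ln_le'; lra.
have lA : l <= n * ln m.
  rewrite -ln_pow; last lra.
  apply: ln_le'; lra.
have lB : l <= m * ln 4.
  rewrite -ln_pow; last lra.
  apply: ln_le'; lra.
have a0 : 0 <= ln n by rewrite -ln_1; apply: ln_le'; lra.
have b0 : 0 <= ln m by rewrite -ln_1; apply: ln_le'; lra.
have l4 := ln4.
rewrite -(exp_ln (INR L)); last lra.
apply: exp_le'; rewrite -/l -(sqrt_square l) //; apply: sqrt_le_1_alt.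
rewrite mult_INR -/n -/m ln_mult; try lra.
case: (leqP M (N * N)) => hNM.
  move/leP/le_INR: hNM; rewrite mult_INR -/n -/m => hNM.
  have hb : ln m <= ln n + ln n by rewrite -ln_mult; try lra; apply: ln_le'; lra.
  have h1 : l * l <= (n * ln m) * (m * ln 4) by apply: Rmult_le_compat.
  have h2 : (n * ln m) * (m * ln 4) <= (n * ln m) * (m * (3/2)).
    apply: Rmult_le_compat_l; first nra.
    apply: Rmult_le_compat_l; lra.
  have h3 : n * m * ((3/2) * ln m) <= n * m * (ln n + ln m).
    apply: Rmult_le_compat_l; nra.
  nra.
move/leP/le_INR: hNM; rewrite S_INR mult_INR -/n -/m => hNM.
have hs := ln_sqrt_bound hM.
have Hs : sqrt m * sqrt m = m by apply: sqrt_sqrt; lra.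
have s0 : 0 <= sqrt m by apply: sqrt_pos.
have h1 : n * ln m <= n * sqrt m by apply: Rmult_le_compat_l; lra.
have h2 : n * sqrt m <= m.
  apply: Rnot_lt_le => h.
  have : m * m < (n * sqrt m) * (n * sqrt m) by apply: Rmult_le_0_lt_compat; lra.
  nra.
have h3 : l * l <= (n * ln m) * (n * ln m) by apply: Rmult_le_compat.
have h4 : (n * ln m) * (n * ln m) <= m * (n * ln m).
  apply: Rmult_le_compat_r; nra.
have h5 : m * (n * ln m) <= n * m * (ln n + ln m).
  have : 0 <= n * m by nra.
  nra.
lra.
Qed.

Theorem mainTheorem9 :
  exists (C : R) (n0 : nat),
  forall (k N : nat) (gamma : 'I_N -> vec k) (B : 'I_N -> seq (vec k)),
    semi_simple gamma B ->
    forall (j : 'I_k) (m : 'I_N -> nat),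
      (forall i, mcoef (B i) j (m i)) ->
      let n := (N * Enorm gamma B)%nat in
      (n0 <= n)%nat ->
      (INR (\big[lcmn/1%nat]_(i < N) m i) <= C * exp (sqrt (INR n * ln (INR n))))%R.
Proof.
exists (INR (expn 4 256)), 0%nat.
move=> k N gamma B _ j m hm n _.
set M := Enorm gamma B.
have M2 : leq 2 M by rewrite /M /Enorm leq_maxr.
have mM : forall i, leq (m i) M.
  move=> i; case: (hm i) => [hin | [_ ->]]; last exact: leq_trans _ M2.
  have h1 : leq (m i) (vnorm (unitv j (m i))).
    by apply: leq_trans (leq_bigmax j); rewrite /unitv ffunE eqxx.
  have h2 : leq (vnorm (unitv j (m i))) (snorm (B i)) by apply: leq_bigmax_seq.
  have h3 : leq (snorm (B i)) (\max_(i < N) snorm (B i)) by apply: (leq_bigmax i).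
  apply: leq_trans h1 (leq_trans h2 (leq_trans h3 _)).
  rewrite /M /Enorm; apply: leq_trans (leq_maxl _ _); exact: leq_maxr.
set Lv := \big[lcmn/1%nat]_(i < N) m i.
set E := exp _.
have C1 : (1 <= INR (expn 4 256))%R.
  by rewrite -[1%R]/(INR 1); apply: le_INR; apply/leP; rewrite expn_gt0.
have E1 : (1 <= E)%R by rewrite /E -exp_0; apply: exp_le'; apply: sqrt_pos.
suff : (INR Lv <= INR (expn 4 256))%R \/ (INR Lv <= E)%R.
  case=> h; nra.
case: (boolP [exists i, m i == 0%nat]) => [/existsP[i /eqP mi0] | hnz].
  have -> : Lv = 0%nat.
    apply/eqP; rewrite -dvd0n; apply: (biglcmn_sup i) => //; by rewrite mi0.
  left; apply: le_INR; apply/leP; done.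
have mpos : forall i, leq 1 (m i).
  move=> i; rewrite lt0n; apply/negP => /eqP h; move/negP: hnz; apply.
  by apply/existsP; exists i; rewrite h.
have LvLc : leq Lv (expn 4 M).
  apply: leq_trans (Lc_bound M); apply: dvdn_leq; first exact: Lc_gt0.
  by apply/dvdn_biglcmP => i _; apply: dvd_Lc; rewrite mpos mM.
have Lv1 : leq 1 Lv.
  by rewrite /Lv; elim/big_ind: _ => // x y; rewrite lcmn_gt0 => -> ->.
case: (leqP 256 M) => hM; last first.
  left; apply: le_INR; apply/leP; apply: leq_trans LvLc _.
  by rewrite leq_exp2l // ltnW.
have LvP : leq Lv (expn M N).
  apply: leq_trans (_ : leq _ (\prod_(i < N) m i)) _.
    apply: dvdn_leq; first by rewrite prodn_gt0.
    apply/dvdn_biglcmP => i _; rewrite (bigD1 i) //=; exact: dvdn_mulr.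
  apply: leq_trans (leq_prod (E2 := fun _ => M) _) _ => [i _|]; first exact: mM.
  by rewrite prod_nat_const card_ord.
case: (posnP N) => [N0|Npos].
  left; apply: le_INR; apply/leP; apply: leq_trans LvP _.
  by rewrite N0 expn0 expn_gt0.
right.
exact: (real_main Lv1 hM Npos LvP LvLc).
Qed.
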